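(* In the Ditto protocol described in the context, let $B,B'$ both be endorsed f-blocks of the same view, or both be certified blocks of the same view. If the round number of $B$ equals the round number of $B'$, then $B=B'$.
   Context: System model: $n=3f+1$ replicas, at most $f$ Byzantine, the rest honest; reliable authenticated channels with eventual delivery of messages between honest replicas (asynchronous network); an ideal threshold signature scheme in which shares on the same message from $t$ distinct replicas combine into one threshold signature. Ditto protocol. Each round $r$ has a designated leader $L_r$. Ranks $(v,r)$ (view, round) are compared lexicographically. A regular block is $B=(id,qc,qc_{coin},r,v,txn)$, where $qc$ certifies the parent block, $qc_{coin}$ is a coin-QC or $\bot$, $r$ is the round, $v$ the view, $txn$ a batch of transactions, and $id$ a hash of the other fields. A (regular) QC for $B$ is a threshold signature on $(B.id,B.r,B.v)$ combined from $2f+1$ shares (votes); its rank is $(B.v,B.r)$; a regular block is certified if it has a QC. A fallback block (f-block) is $\bar B=(B,h,i)$ with height $h\in\{1,2\}$ and proposer $i$; an f-QC for it is a threshold signature on $(id,r,v,h,i)$ from $2f+1$ shares. A coin-QC of view $v$ is the unique threshold signature on the hash of $v$ combined from $f+1$ coin shares; it elects a leader $L\in\{1,\dots,n\}$, each with probability $1/n$. An f-QC (and its f-block) of view $v$ by proposer $L$ is endorsed if an f-QC for it exists and a coin-QC of view $v$ elects $L$; endorsed f-QCs are handled as regular QCs in Lock, Commit and Advance Round, and rank higher than any regular QC of the same view. A timeout message is a share on $v_{cur}$ together with the sender's $qc_{high}$; $2f+1$ of them for view $v$ form an f-TC of view $v$. A block or f-block $B'$ extends $B$ if $B$ is an ancestor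 of $B'$ via a chain of QCs or endorsed f-QCs (every block extends itself). Each replica keeps $r_{vote}=0$, current round $r_{cur}$, current view $v_{cur}=0$, $qc_{high}$ (initially the genesis QC), a flag $mode=false$, and during a fallback, for each replica $j$, $fvotedround[j]$ and $fvotedheight[j]$. Steady state. Propose: upon entering round $r$, $L_r$ multicasts $B=(id,qc_{high},qc_{coin},r,v_{cur},txn)$, with $qc_{coin}$ the coin-QC of view $v_{cur}-1$ if $B$ is its first proposal in view $v_{cur}$, else $\bot$. Vote: upon the first valid proposal $B=(id,qc,qc_{coin},r,v,txn)$ from $L_r$, execute Exit Fallback if $qc_{coin}\neq\bot$, otherwise Advance Round, Lock, Commit; then if $r=r_{cur}$, $v=v_{cur}$, $r>r_{vote}$, $r=qc.r+1$, rank$(qc)\ge$ rank$(qc_{high})$ and $mode=false$, send a share on $(id,r,v)$ to $L_{r+1}$ and set $r_{vote}\gets r$. Lock: upon seeing a valid QC $qc$, set $qc_{high}\gets\max(qc_{high},qc)$ by rank. Commit: whenever there are two adjacent blocks $B,B'$ ($B$ the parent of $B'$) in the chain with the same view number, each a certified regular block or an endorsed f-block, commit $B$ and all its ancestors. Advance Round: upon a valid $qc$, $r_{cur}\gets\max(r_{cur},qc.r+1)$. Timer: upon entering a new round or view reset a timer; on expiry set $mode\gets true$ and multicast a timeout message; upon a valid timeout message run Advance Round, Lock, Commit. Asynchronous fallback. Enter Fallback: upon receiving or forming an f-TC of view $v\ge v_{cur}$, set $mode\gets true$, $v_{cur}\gets v$, $fvotedround[j]\gets0$, $fvotedheight[j]\gets0$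 for all $j$, and multicast the f-TC and a height-1 f-block $(id,qc_{high},qc_{high}.r+1,v_{cur},txn,1,i)$. Fallback Vote: upon an f-block of height $h$, round $r$, view $v$ from replica $j$, if $h>fvotedheight[j]$, $mode=true$, and either ($h=1$, its QC $qc$ satisfies rank$(qc)\ge$ rank$(qc_{high})$, $r=qc.r+1$, $v=v_{cur}$) or ($h=2$, it contains a valid f-QC $\bar{qc}$, $v=v_{cur}$, $r=\bar{qc}.r+1$, $r>fvotedround[j]$, $h=\bar{qc}.height+1$), set $fvotedround[j]\gets r$, $fvotedheight[j]\gets h$ and send a share on $(id,r,v,h,j)$ to $j$. Fallback Propose: upon the first height-$h$ f-block (by any $j$) being certified by some f-QC while $mode=true$: if $h=2$ multicast that f-QC; if $h=1$ multicast a height-2 f-block containing that f-QC with round one larger. Leader Election: upon $2f+1$ valid height-2 view-$v_{cur}$ f-QCs by distinct proposers and $mode=true$, multicast a coin share for $v_{cur}$. Exit Fallback: upon receiving a coin-QC of view $\ge v_{cur}$ or $f+1$ coin shares forming one, multicast it; with $L$ the elected leader, if $mode=true$ set $r_{vote}\gets fvotedround[L]$; set $mode\gets false$, $v_{cur}\gets qc_{coin}.v+1$; execute Advance Round, Lock, Commit. *)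

(* Defs.v *)
(* An abstract operational model of the Ditto protocol
   (safety-relevant part), following the paper's rules. *)
From Stdlib Require Import Arith List Bool.
Import ListNotations.

(* A QC is a threshold signature; we represent it by the payload it signs.
   Replicas are identified by naturals i < n. *)
Inductive QC : Type :=
  | QCgen
  | QCreg (id r v : nat)
  | QCf (id r v h i : nat).

(* A regular block B = (id, qc, qc_coin, r, v, txn); the id is
   [hash B] (a hash of the remaining fields). [bcoin = Some c] means
   qc_coin is the coin-QC of view c, [None] means qc_coin = bot. *)
Record Block : Type := mkBlock {
  bqc : QC; bcoin : option nat; bround : nat; bview : nat; btxn : nat }.

Record FBlock : Type := mkFBlock { fblk : Block; fheight : nat; fprop : nat }.

(* Messages on which signature shares are produced. *)
Inductive Payload : Type :=
  | PVote (id r v : nat)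
  | PFVote (id r v h j : nat)
  | PTimeout (v : nat)
  | PCoin (v : nat).

(* Messages sent by honest replicas whose content matters
   (the sender is recorded separately, channels are authenticated). *)
Inductive Msg : Type :=
  | MProp (B : Block)
  | MFBlk (B : Block) (h : nat).  (* f-block (B, h, sender) *)

Definition qround (q : QC) : nat :=
  match q with QCgen => 0 | QCreg _ r _ => r | QCf _ r _ _ _ => r end.
Definition qview (q : QC) : nat :=
  match q with QCgen => 0 | QCreg _ _ v => v | QCf _ _ v _ _ => v end.
(* endorsed f-QCs rank higher than any regular QC of the same view *)
Definition qflag (q : QC) : nat :=
  match q with QCf _ _ _ _ _ => 1 | _ => 0 end.

Definition rank_lt (a b : QC) : bool :=
  (qview a <? qview b) ||
  ((qview a =? qview b) &&
   ((qflag a <? qflag b) || ((qflag a =? qflag b) && (qround a <? qround b)))).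
Definition rank_le (a b : QC) : bool := negb (rank_lt b a).

Record Params : Type := mkParams {
  n : nat;
  f : nat;
  honest : nat -> bool;
  leader : nat -> nat;
  elect : nat -> nat;           (* leader elected by the (unique) coin-QC of view v *)
  hash : Block -> nat
}.

Record LState : Type := mkL {
  r_vote : nat; r_cur : nat; v_cur : nat; qc_high : QC; mode : bool;
  fvround : nat -> nat; fvheight : nat -> nat;
  fb_last : option nat;          (* view of the last fallback entered *)
  fprop2 : bool;                 (* height-2 f-block already proposed in this fallback *)
  lastpropview : option nat
}.

Record GState : Type := mkG {
  loc : nat -> LState;                 (* local states (meaningful for honest ids) *)
  signed : nat -> Payload -> Prop;     (* shares produced so far by honest replicas *)
  sent : nat -> Msg -> Prop            (* messages sent so far by honest replicas *)
}.

Definition init_l : LState :=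
  {| r_vote := 0; r_cur := 1; v_cur := 0; qc_high := QCgen; mode := false;
     fvround := fun _ => 0; fvheight := fun _ => 0; fb_last := None;
     fprop2 := false; lastpropview := None |}.

Definition init_g : GState :=
  {| loc := fun _ => init_l; signed := fun _ _ => False; sent := fun _ _ => False |}.

Definition set_loc (g : GState) (i : nat) (l : LState) : GState :=
  {| loc := fun k => if k =? i then l else loc g k; signed := signed g; sent := sent g |}.
Definition add_sig (g : GState) (i : nat) (p : Payload) : GState :=
  {| loc := loc g; signed := fun k q => signed g k q \/ (k = i /\ q = p); sent := sent g |}.
Definition add_sent (g : GState) (i : nat) (m : Msg) : GState :=
  {| loc := loc g; signed := signed g; sent := fun k q => sent g k q \/ (k = i /\ q = m) |}.

(* A threshold signature on p combining t shares exists iff there are t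
   distinct replicas each of which has signed p; Byzantine replicas can
   sign anything. *)
Definition quorum (P : Params) (g : GState) (t : nat) (p : Payload) : Prop :=
  exists S : list nat, NoDup S /\ length S = t /\
    forall j, In j S -> j < n P /\ (honest P j = true -> signed g j p).

Definition coin_ok (P : Params) (g : GState) (v : nat) : Prop :=
  quorum P g (f P + 1) (PCoin v).

Definition valid_qc (P : Params) (g : GState) (q : QC) : Prop :=
  match q with
  | QCgen => True
  | QCreg id r v => quorum P g (2 * f P + 1) (PVote id r v)
  | QCf id r v h i => quorum P g (2 * f P + 1) (PFVote id r v h i)
  end.

(* QCs usable in Lock / Advance Round / as parent: regular QCs and
   endorsed f-QCs. *)
Definition usable (P : Params) (g : GState) (q : QC) : Prop :=
  match q with
  | QCf _ _ v _ i => valid_qc P g q /\ coin_ok P g v /\ elect P v = i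
  | _ => valid_qc P g q
  end.

Definition upd_l (l : LState) (rv rc vc : nat) (qh : QC) (m : bool)
  (fr fh : nat -> nat) (fl : option nat) (fp : bool) (lp : option nat) : LState :=
  {| r_vote := rv; r_cur := rc; v_cur := vc; qc_high := qh; mode := m;
     fvround := fr; fvheight := fh; fb_last := fl; fprop2 := fp; lastpropview := lp |}.

Definition lock (l : LState) (q : QC) : LState :=
  if rank_lt (qc_high l) q then
    upd_l l (r_vote l) (r_cur l) (v_cur l) q (mode l) (fvround l) (fvheight l)
          (fb_last l) (fprop2 l) (lastpropview l)
  else l.

Definition advance (l : LState) (q : QC) : LState :=
  upd_l l (r_vote l) (Nat.max (r_cur l) (qround q + 1)) (v_cur l) (qc_high l) (mode l)
        (fvround l) (fvheight l) (fb_last l) (fprop2 l) (lastpropview l).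

Definition exitfb (P : Params) (l : LState) (c : nat) : LState :=
  upd_l l (if mode l then fvround l (elect P c) else r_vote l) (r_cur l) (c + 1)
        (qc_high l) false (fvround l) (fvheight l) (fb_last l) (fprop2 l) (lastpropview l).

(* state after the pre-voting part of the Vote rule *)
Definition pre_vote (P : Params) (l : LState) (B : Block) : LState :=
  match bcoin B with
  | Some c => if v_cur l <=? c then exitfb P l c else l
  | None => advance (lock l (bqc B)) (bqc B)
  end.

Definition vote_cond (l : LState) (B : Block) : bool :=
  (bround B =? r_cur l) && (bview B =? v_cur l) && (r_vote l <? bround B) &&
  (bround B =? qround (bqc B) + 1) && rank_le (qc_high l) (bqc B) && negb (mode l).

Definition set_rvote (l : LState) (r : nat) : LState :=
  upd_l l r (r_cur l) (v_cur l) (qc_high l) (mode l) (fvround l) (fvheight l)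
        (fb_last l) (fprop2 l) (lastpropview l).

Definition upd_fun (g : nat -> nat) (j x : nat) : nat -> nat :=
  fun k => if k =? j then x else g k.

Inductive step (P : Params) : GState -> GState -> Prop :=
  (* Lock + Advance Round upon seeing a valid QC or endorsed f-QC
     (also covers valid timeout messages carrying a qc_high) *)
  | St_lock g i q :
      honest P i = true -> i < n P -> usable P g q ->
      step P g (set_loc g i (advance (lock (loc g i) q) q))
  | St_timer g i :
      honest P i = true -> i < n P ->
      let l := loc g i in
      step P g (add_sig (set_loc g i
                  (upd_l l (r_vote l) (r_cur l) (v_cur l) (qc_high l) true (fvround l)
                     (fvheight l) (fb_last l) (fprop2 l) (lastpropview l)))
                i (PTimeout (v_cur l)))
  | St_propose g i txn :
      honest P i = true -> i < n P ->
      let l := loc g i in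
      leader P (r_cur l) = i ->
      let first := match lastpropview l with Some w => negb (w =? v_cur l) | None => true end in
      let coin := if first && (0 <? v_cur l) then Some (v_cur l - 1) else None in
      step P g (add_sent (set_loc g i
                  (upd_l l (r_vote l) (r_cur l) (v_cur l) (qc_high l) (mode l) (fvround l)
                     (fvheight l) (fb_last l) (fprop2 l) (Some (v_cur l))))
                i (MProp (mkBlock (qc_high l) coin (r_cur l) (v_cur l) txn)))
  | St_vote g i B :
      honest P i = true -> i < n P ->
      (honest P (leader P (bround B)) = true -> sent g (leader P (bround B)) (MProp B)) ->
      usable P g (bqc B) ->
      (match bcoin B with Some c => coin_ok P g c | None => True end) ->
      let l1 := pre_vote P (loc g i) B in
      step P g (if vote_cond l1 B
                then add_sig (set_loc g i (set_rvote l1 (bround B))) i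
                       (PVote (hash P B) (bround B) (bview B))
                else set_loc g i l1)
  | St_exit g i c :
      honest P i = true -> i < n P -> coin_ok P g c -> v_cur (loc g i) <= c ->
      step P g (set_loc g i (exitfb P (loc g i) c))
  | St_enter g i v txn :
      honest P i = true -> i < n P ->
      quorum P g (2 * f P + 1) (PTimeout v) ->
      let l := loc g i in
      v_cur l <= v -> fb_last l <> Some v ->
      step P g (add_sent (set_loc g i
                  (upd_l l (r_vote l) (r_cur l) v (qc_high l) true (fun _ => 0) (fun _ => 0)
                     (Some v) false (lastpropview l)))
                i (MFBlk (mkBlock (qc_high l) None (qround (qc_high l) + 1) v txn) 1))
  | St_fvote g i B h j :
      honest P i = true -> i < n P -> j < n P ->
      (honest P j = true -> sent g j (MFBlk B h)) ->
      let l := loc g i in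
      fb_last l = Some (v_cur l) -> mode l = true ->
      fvheight l j < h -> bview B = v_cur l ->
      ((h = 1 /\ usable P g (bqc B) /\ rank_le (qc_high l) (bqc B) = true /\
        bround B = qround (bqc B) + 1) \/
       (h = 2 /\ exists id r' v' h' i', bqc B = QCf id r' v' h' i' /\
          valid_qc P g (bqc B) /\ bround B = r' + 1 /\ fvround l j < bround B /\
          h = h' + 1)) ->
      step P g (add_sig (set_loc g i
                  (upd_l l (r_vote l) (r_cur l) (v_cur l) (qc_high l) (mode l)
                     (upd_fun (fvround l) j (bround B)) (upd_fun (fvheight l) j h)
                     (fb_last l) (fprop2 l) (lastpropview l)))
                i (PFVote (hash P B) (bround B) (bview B) h j))
  | St_fpropose g i id r j txn :
      honest P i = true -> i < n P ->
      let l := loc g i in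
      mode l = true -> fprop2 l = false ->
      quorum P g (2 * f P + 1) (PFVote id r (v_cur l) 1 j) ->
      step P g (add_sent (set_loc g i
                  (upd_l l (r_vote l) (r_cur l) (v_cur l) (qc_high l) (mode l) (fvround l)
                     (fvheight l) (fb_last l) true (lastpropview l)))
                i (MFBlk (mkBlock (QCf id r (v_cur l) 1 j) None (r + 1) (v_cur l) txn) 2))
  | St_elect g i (S : list nat) :
      honest P i = true -> i < n P ->
      let l := loc g i in
      mode l = true -> NoDup S -> length S = 2 * f P + 1 ->
      (forall j, In j S -> j < n P /\
         exists id r, quorum P g (2 * f P + 1) (PFVote id r (v_cur l) 2 j)) ->
      step P g (add_sig g i (PCoin (v_cur l))).

Inductive reachable (P : Params) : GState -> Prop :=
  | R_init : reachable P init_g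
  | R_step g g' : reachable P g -> step P g g' -> reachable P g'.

Definition certified (P : Params) (g : GState) (B : Block) : Prop :=
  quorum P g (2 * f P + 1) (PVote (hash P B) (bround B) (bview B)).

Definition endorsed (P : Params) (g : GState) (F : FBlock) : Prop :=
  quorum P g (2 * f P + 1)
    (PFVote (hash P (fblk F)) (bround (fblk F)) (bview (fblk F)) (fheight F) (fprop F))
  /\ coin_ok P g (bview (fblk F)) /\ elect P (bview (fblk F)) = fprop F.

Definition num_byz (P : Params) : nat :=
  length (filter (fun i => negb (honest P i)) (List.seq 0 (n P))).

(* Main.v *)
Require Import Defs.
From Stdlib Require Import Arith List Lia Bool.
Import ListNotations.

Definition memb (S : list nat) (x : nat) : bool :=
  if in_dec Nat.eq_dec x S then true else false.

Lemma memb_iff S x : memb S x = true <-> In x S.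
Proof. unfold memb; destruct (in_dec Nat.eq_dec x S); split; intros; auto; discriminate. Qed.

Lemma quorum_honest (P : Params) (S1 S2 : list nat) :
  n P = 3 * f P + 1 -> num_byz P <= f P ->
  NoDup S1 -> length S1 = 2 * f P + 1 -> (forall j, In j S1 -> j < n P) ->
  NoDup S2 -> length S2 = 2 * f P + 1 -> (forall j, In j S2 -> j < n P) ->
  exists j, In j S1 /\ In j S2 /\ honest P j = true.
Proof.
  intros Hn Hb N1 L1 B1 N2 L2 B2.
  set (Y := filter (memb S1) S2).
  set (Z := filter (fun x => negb (memb S1 x)) S2).
  assert (HYZ : length Y + length Z = length S2) by apply filter_length.
  assert (HZ : length (S1 ++ Z) <= length (seq 0 (n P))).
  { apply NoDup_incl_length.
    - apply NoDup_app; auto. apply NoDup_filter; auto.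
      intros a Ha Hz. unfold Z in Hz. apply filter_In in Hz as [_ Hz].
      apply negb_true_iff in Hz. assert (memb S1 a = true) by (apply memb_iff; auto).
      congruence.
    - intros a Ha. apply in_seq. apply in_app_or in Ha as [Ha|Ha].
      + specialize (B1 a Ha); lia.
      + unfold Z in Ha. apply filter_In in Ha as [Ha _]. specialize (B2 a Ha); lia. }
  rewrite length_app, length_seq in HZ.
  destruct (existsb (honest P) Y) eqn:E.
  - apply existsb_exists in E as [x [Hx Hh]]. unfold Y in Hx.
    apply filter_In in Hx as [Hx Hm]. apply memb_iff in Hm. exists x; auto.
  - exfalso.
    assert (length Y <= num_byz P).
    { unfold num_byz. apply NoDup_incl_length.
      - apply NoDup_filter; auto.
      - intros a Ha. apply filter_In. split.
        + apply in_seq. unfold Y in Ha. apply filter_In in Ha as [Ha _].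
          specialize (B2 a Ha); lia.
        + destruct (honest P a) eqn:Ea; auto.
          assert (existsb (honest P) Y = true) by (apply existsb_exists; eauto).
          congruence. }
    lia.
Qed.

Definition InvJ (l : LState) (s : Payload -> Prop) : Prop :=
 (forall h1 h2 r v, s (PVote h1 r v) -> s (PVote h2 r v) -> h1 = h2) /\
 (forall h r v, s (PVote h r v) -> v < v_cur l \/ (v = v_cur l /\ r <= r_vote l)) /\
 (forall h1 h2 r v ht1 ht2 p, s (PFVote h1 r v ht1 p) -> s (PFVote h2 r v ht2 p) ->
     h1 = h2 /\ ht1 = ht2) /\
 (forall h r v ht p, s (PFVote h r v ht p) -> v < v_cur l \/
     (v = v_cur l /\ fb_last l = Some v /\ 1 <= ht <= fvheight l p /\ ht <= 2 /\
      r <= fvround l p)).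

Ltac isplit := unfold InvJ; split; [|split; [|split]].

Definition irr (q : Payload) : Prop :=
  match q with PVote _ _ _ | PFVote _ _ _ _ _ => False | _ => True end.

Lemma InvJ_weak l s s' : InvJ l s -> (forall q, s' q -> s q \/ irr q) -> InvJ l s'.
Proof.
  intros [I1 [I2 [I3 I4]]] H. isplit.
  - intros. destruct (H _ H0) as [?|[]]; destruct (H _ H1) as [?|[]]; eauto.
  - intros. destruct (H _ H0) as [?|[]]; eauto.
  - intros. destruct (H _ H0) as [?|[]]; destruct (H _ H1) as [?|[]]; eapply I3; eauto.
  - intros. destruct (H _ H0) as [?|[]]; eauto.
Qed.

Lemma InvJ_frame l l' s : InvJ l s -> v_cur l' = v_cur l -> r_vote l <= r_vote l' ->
  fb_last l' = fb_last l -> fvround l' = fvround l -> fvheight l' = fvheight l -> InvJ l' s.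
Proof.
  intros [I1 [I2 [I3 I4]]] E1 E2 E3 E4 E5. isplit; auto.
  - intros. destruct (I2 _ _ _ H); lia.
  - intros h r v ht p H. rewrite E1, E3, E4, E5. exact (I4 _ _ _ _ _ H).
Qed.

Lemma InvJ_incr l l' s : InvJ l s -> v_cur l < v_cur l' -> InvJ l' s.
Proof.
  intros [I1 [I2 [I3 I4]]] E. isplit; auto.
  - intros. destruct (I2 _ _ _ H); lia.
  - intros. left. destruct (I4 _ _ _ _ _ H); lia.
Qed.

Lemma InvJ_enter l s v : InvJ l s -> v_cur l <= v -> fb_last l <> Some v ->
  InvJ (upd_l l (r_vote l) (r_cur l) v (qc_high l) true (fun _ => 0) (fun _ => 0)
          (Some v) false (lastpropview l)) s.
Proof.
  intros [I1 [I2 [I3 I4]]] E F. isplit; auto; simpl.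
  - intros. destruct (I2 _ _ _ H) as [?|[? ?]]; [lia|].
    destruct (Nat.eq_dec (v_cur l) v); [right|left]; lia.
  - intros. left. destruct (I4 _ _ _ _ _ H) as [?|[? [? ?]]]; [lia|].
    subst. destruct (Nat.eq_dec (v_cur l) v); [subst; congruence | lia].
Qed.

Lemma InvJ_lock l q s : InvJ l s -> InvJ (lock l q) s.
Proof. intros H. unfold lock. destruct rank_lt; auto. Qed.

Lemma InvJ_advance l q s : InvJ l s -> InvJ (advance l q) s.
Proof. intros H. eapply InvJ_frame; eauto. Qed.

Lemma InvJ_exitfb P l c s : InvJ l s -> v_cur l <= c -> InvJ (exitfb P l c) s.
Proof. intros H E. eapply InvJ_incr; eauto. simpl. lia. Qed.

Lemma InvJ_prevote P l B s : InvJ l s -> InvJ (pre_vote P l B) s.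
Proof.
  intros H. unfold pre_vote. destruct (bcoin B) as [c|].
  - destruct (v_cur l <=? c) eqn:E; auto. apply Nat.leb_le in E. apply InvJ_exitfb; auto.
  - apply InvJ_advance, InvJ_lock; auto.
Qed.

Lemma InvJ_vote l s x B : InvJ l s -> vote_cond l B = true ->
  InvJ (set_rvote l (bround B)) (fun q => s q \/ q = PVote x (bround B) (bview B)).
Proof.
  intros [I1 [I2 [I3 I4]]] V. unfold vote_cond in V.
  repeat rewrite andb_true_iff in V. destruct V as [[[[[_ V2] V3] _] _] _].
  apply Nat.eqb_eq in V2. apply Nat.ltb_lt in V3.
  isplit; simpl.
  - intros h1 h2 r v [A|A] [C|C].
    + eauto.
    + inversion C; subst. destruct (I2 _ _ _ A); lia.
    + inversion A; subst. destruct (I2 _ _ _ C); lia.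
    + inversion A; inversion C; subst; auto.
  - intros h r v [A|A].
    + destruct (I2 _ _ _ A); lia.
    + inversion A; subst. right; lia.
  - intros h1 h2 r v ht1 ht2 p [A|A] [C|C]; try discriminate; eapply I3; eauto.
  - intros h r v ht p [A|A]; try discriminate. apply I4 in A. exact A.
Qed.

Lemma InvJ_fvote l s x r h j : InvJ l s -> fb_last l = Some (v_cur l) ->
  fvheight l j < h -> 1 <= h <= 2 -> (h = 2 -> fvround l j < r) ->
  InvJ (upd_l l (r_vote l) (r_cur l) (v_cur l) (qc_high l) (mode l)
          (upd_fun (fvround l) j r) (upd_fun (fvheight l) j h)
          (fb_last l) (fprop2 l) (lastpropview l))
       (fun q => s q \/ q = PFVote x r (v_cur l) h j).
Proof.
  intros [I1 [I2 [I3 I4]]] F Hh H12 Hr.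
  assert (K : forall h' r' ht', s (PFVote h' r' (v_cur l) ht' j) -> r' < r).
  { intros. destruct (I4 _ _ _ _ _ H) as [?|[_ [_ [? [? ?]]]]]; [lia|].
    assert (h = 2) by lia. specialize (Hr H3). lia. }
  isplit; simpl.
  - intros h1 h2 r' v [A|A] [C|C]; try discriminate; eauto.
  - intros h' r' v [A|A]; try discriminate. apply I2 in A. exact A.
  - intros h1 h2 r' v ht1 ht2 p [A|A] [C|C].
    + eapply I3; eauto.
    + inversion C; subst. apply K in A. lia.
    + inversion A; subst. apply K in C. lia.
    + inversion A; inversion C; subst; auto.
  - intros h' r' v ht p [A|A].
    + destruct (I4 _ _ _ _ _ A) as [?|[? [? [? [? ?]]]]]; [left; lia|right].
      unfold upd_fun. destruct (p =? j) eqn:E.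
      * apply Nat.eqb_eq in E; rewrite E in *. assert (Eh : h = 2) by lia. specialize (Hr Eh).
        repeat split; auto; lia.
      * repeat split; auto; lia.
    + inversion A; subst. right. unfold upd_fun. rewrite Nat.eqb_refl.
      repeat split; auto; lia.
Qed.

Lemma inv_reach P g : reachable P g -> forall j, InvJ (loc g j) (signed g j).
Proof.
  induction 1.
  - intros j. simpl. isplit; intros; contradiction.
  - rename H0 into S. revert IHreachable. destruct S; intros IHreachable k; simpl.
    + unfold set_loc; simpl. destruct (k =? i) eqn:E; auto.
      apply InvJ_advance, InvJ_lock. apply Nat.eqb_eq in E; rewrite E in *; auto.
    + unfold set_loc; simpl. destruct (k =? i) eqn:E.
      * apply Nat.eqb_eq in E; rewrite E in *.
        eapply InvJ_weak; [eapply InvJ_frame; [apply IHreachable|..]; reflexivity|].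
        simpl. intros q [A|[_ A]]; [left|right]; subst; simpl; auto.
      * eapply InvJ_weak; [apply IHreachable|]. simpl.
        intros q [A|[A _]]; [left; auto|]. rewrite A, Nat.eqb_refl in E; discriminate.
    + unfold set_loc; simpl. destruct (k =? i) eqn:E; auto.
      apply Nat.eqb_eq in E; rewrite E in *. eapply InvJ_frame; [apply IHreachable|..]; reflexivity.
    + subst l1. destruct (vote_cond (pre_vote P (loc g i) B) B) eqn:V; simpl; unfold set_loc; simpl.
      * destruct (k =? i) eqn:E.
        -- apply Nat.eqb_eq in E; rewrite E in *.
           eapply InvJ_weak; [apply (InvJ_vote _ (signed g i) (hash P B) B);
             [apply InvJ_prevote, IHreachable | exact V]|].
           intros q [A|[_ A]]; left; auto.
        -- eapply InvJ_weak; [apply IHreachable|]. simpl.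
           intros q [A|[A _]]; [left; auto|]. rewrite A, Nat.eqb_refl in E; discriminate.
      * destruct (k =? i) eqn:E; auto.
        apply Nat.eqb_eq in E; rewrite E in *. apply InvJ_prevote, IHreachable.
    + unfold set_loc; simpl. destruct (k =? i) eqn:E; auto.
      apply Nat.eqb_eq in E; rewrite E in *. apply InvJ_exitfb; [apply IHreachable|auto].
    + unfold set_loc; simpl. destruct (k =? i) eqn:E; auto.
      apply Nat.eqb_eq in E; rewrite E in *. apply InvJ_enter; [apply IHreachable|auto|auto].
    + subst l. unfold set_loc; simpl. destruct (k =? i) eqn:E.
      * apply Nat.eqb_eq in E; rewrite E in *.
        assert (Hh : 1 <= h <= 2 /\ (h = 2 -> fvround (loc g i) j < bround B)).
        { destruct H8 as [[-> _]|[-> [id [r' [v' [h' [i' [_ [_ [_ [? _]]]]]]]]]]];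
            split; intros; lia. }
        destruct Hh as [Hh1 Hh2].
        eapply InvJ_weak; [apply (InvJ_fvote (loc g i) (signed g i) (hash P B) (bround B) h j);
           [apply IHreachable| exact H4 | exact H6 | exact Hh1 | exact Hh2]|].
        intros q [A|[_ A]]; left; [left; auto|right]. rewrite A, H7. reflexivity.
      * eapply InvJ_weak; [apply IHreachable|]. simpl.
        intros q [A|[A _]]; [left; auto|]. rewrite A, Nat.eqb_refl in E; discriminate.
    + unfold set_loc; simpl. destruct (k =? i) eqn:E; auto.
      apply Nat.eqb_eq in E; rewrite E in *. eapply InvJ_frame; [apply IHreachable|..]; reflexivity.
    + eapply InvJ_weak; [apply IHreachable|]. simpl.
      intros q [A|[_ A]]; [left; auto|right]. subst; simpl; auto.
Qed.

Theorem lemma8 (P : Params) (g : GState) :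
  n P = 3 * f P + 1 ->
  num_byz P <= f P ->
  (forall r, leader P r < n P) ->
  (forall v, elect P v < n P) ->
  (forall B1 B2 : Block, hash P B1 = hash P B2 -> B1 = B2) ->
  reachable P g ->
  (forall F1 F2 : FBlock,
     endorsed P g F1 -> endorsed P g F2 ->
     bview (fblk F1) = bview (fblk F2) -> bround (fblk F1) = bround (fblk F2) ->
     F1 = F2) /\
  (forall B1 B2 : Block,
     certified P g B1 -> certified P g B2 ->
     bview B1 = bview B2 -> bround B1 = bround B2 ->
     B1 = B2).
Proof.
  intros Hn Hb _ _ Hinj R.
  pose proof (inv_reach P g R) as INV.
  split.
  - intros F1 F2 [[S1 [N1 [L1 A1]]] [_ E1]] [[S2 [N2 [L2 A2]]] [_ E2]] Hv Hr.
    destruct (quorum_honest P S1 S2 Hn Hb N1 L1 (fun j H => proj1 (A1 j H))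
                N2 L2 (fun j H => proj1 (A2 j H))) as [j [J1 [J2 Hj]]].
    pose proof (proj2 (A1 j J1) Hj) as G1. pose proof (proj2 (A2 j J2) Hj) as G2.
    rewrite <- Hv, <- Hr in G2. rewrite <- E1 in G1. rewrite <- E2, <- Hv in G2.
    destruct (INV j) as [_ [_ [I3 _]]].
    destruct (I3 _ _ _ _ _ _ _ G1 G2) as [Hh Ht].
    apply Hinj in Hh.
    destruct F1, F2; simpl in *; subst; congruence.
  - intros B1 B2 [S1 [N1 [L1 A1]]] [S2 [N2 [L2 A2]]] Hv Hr.
    destruct (quorum_honest P S1 S2 Hn Hb N1 L1 (fun j H => proj1 (A1 j H))
                N2 L2 (fun j H => proj1 (A2 j H))) as [j [J1 [J2 Hj]]].
    pose proof (proj2 (A1 j J1) Hj) as G1. pose proof (proj2 (A2 j J2) Hj) as G2.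
    rewrite <- Hv, <- Hr in G2.
    destruct (INV j) as [I1 _].
    apply Hinj. eapply I1; eauto.
Qed.
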